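(* Fix $0<q<1$ and $t\in\mathbb R$. The collection of distributions $G\in\mathcal G$ satisfying $T_q(G)=t$ is convex, and the collection of distributions $G\in\mathcal G$ satisfying $T_q(G)\ge t$ is convex.
   Context: $E(t)=1-e^{-t}$, $\bar E=1-E$, $\bar G=1-G$. $\mathcal G=\{E\#F:F$ a probability distribution on $[1,\infty)\}$ with $(E\#F)(t)=\int E(t/\mu)\,dF(\mu)$. FDR functional $T_q(G)=\inf\{t:\bar G(t)\ge\frac1q\bar E(t)\}$ (with $\inf\emptyset=+\infty$). *)

(* Defs.v *)
From HB Require Import structures.
From mathcomp Require Import all_boot all_order all_algebra.
From mathcomp Require Import all_classical all_reals all_analysis.
Set Implicit Arguments. Unset Strict Implicit. Unset Printing Implicit Defensive.
Import Order.TTheory GRing.Theory Num.Theory.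
Import numFieldNormedType.Exports.
Local Open Scope classical_set_scope.
Local Open Scope ring_scope.

Definition Eexp {R : realType} (t : R) : R := 1 - expR (- t).

Definition mixE {R : realType} (F : probability R R) (t : R) : R :=
  Rintegral F `[1, +oo[%classic (fun mu => Eexp (t / mu)).

Definition inGclass {R : realType} (G : R -> R) : Prop :=
  exists F : probability R R, F `[1, +oo[%classic = 1%E /\ G = mixE F.

(* T_q(G) = inf { t : 1 - G t >= (1/q) (1 - E t) }, inf of empty set = +oo *)
Definition Tq {R : realType} (q : R) (G : R -> R) : \bar R :=
  ereal_inf [set t%:E | t in [set t : R | (1 - Eexp t) / q <= 1 - G t]].

Definition convex_collection {R : realType} (S : set (R -> R)) : Prop :=
  forall G1 G2 (l : R), S G1 -> S G2 -> 0 <= l <= 1 ->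
    S (fun t => l * G1 t + (1 - l) * G2 t).

(* Main.v *)
Require Import Defs.
From HB Require Import structures.
From mathcomp Require Import all_boot all_order all_algebra.
From mathcomp Require Import all_classical all_reals all_analysis.
From mathcomp Require Import ring lra measurable_realfun.
Import Order.TTheory GRing.Theory Num.Theory.
Import numFieldNormedType.Exports.
Local Open Scope classical_set_scope.
Local Open Scope ring_scope.

Section helpers.
Context {R : realType}.

Definition DD : set R := `[1, +oo[%classic.
Definition ef (t mu : R) : R := expR (- (t / mu)).

Lemma mDD : measurable DD.
Proof. exact: measurable_itv. Qed.

Lemma DD_ge1 mu : DD mu -> 1 <= mu.
Proof. by rewrite /DD /= in_itv /= andbT. Qed.

Lemma ef_meas t : measurable_fun DD (ef t).
Proof.
have H : measurable_fun (`]0, +oo[%classic : set R) (ef t).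
  apply: measurable_realfun.open_continuous_measurable_fun; first exact: interval_open.
  move=> x; rewrite inE /= in_itv /= andbT => x0.
  rewrite (_ : ef t = expR \o (fun mu => - (t / mu))) //.
  have h : {for x, continuous (fun mu : R => - (t / mu))}.
    apply: cvgN; apply: cvgM; first exact: cvg_cst.

    by apply: inv_continuous; rewrite gt_eqF.
  exact: (continuous_comp h (@continuous_expR R _)).
apply: (measurable_funS _ _ H); first exact: measurable_itv.
move=> x /DD_ge1 hx /=; rewrite in_itv /= andbT; exact: lt_le_trans hx.
Qed.

Lemma ef_bound t mu : DD mu -> 0 <= ef t mu <= expR `|t|.
Proof.
move=> /DD_ge1 h1; rewrite expR_ge0 /= /ef ler_expR.
have mu0 : 0 < mu by apply: lt_le_trans h1.
apply: (le_trans (ler_norm _)); rewrite normrN normrM (gtr0_norm (x:=mu^-1)) ?invr_gt0 //.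
by rewrite ler_piMr // invr_le1 // ?unitfE ?gt_eqF.
Qed.

Lemma ef_int (F : probability R R) t : F.-integrable DD (EFin \o ef t).
Proof.
apply: measurable_bounded_integrable; first exact: mDD.
- by apply: (le_lt_trans (probability_le1 _ mDD)); rewrite ltry.
- exact: ef_meas.
exists (expR `|t|); split; first by rewrite num_real.
move=> M hM x Dx /=; have /andP[h0 h1] := ef_bound t x Dx.
by rewrite ger0_norm // (le_trans h1) // ltW.
Qed.

Lemma mixE_eq (F : probability R R) t : F DD = 1%E ->
  mixE F t = 1 - \int[F]_(mu in DD) ef t mu.
Proof.
move=> FD; rewrite /mixE (_ : (fun mu => Eexp (t / mu)) = (fun mu => (fun _ => 1) mu - ef t mu)) //.
rewrite /DD in FD *.
rewrite (RintegralB (f1 := fun _ => 1) (f2 := ef t)).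
- rewrite Rintegral_cst; last exact: measurable_itv.
  by rewrite mul1r; congr (_ - _); exact: (f_equal fine FD).
- exact: measurable_itv.
- apply: finite_measure_integrable_cst; exact: measurable_itv.
- exact: ef_int.
Qed.

Lemma ef_mono (F : probability R R) x y : y <= x ->
  expR (- (x - y)) * \int[F]_(mu in DD) ef y mu <= \int[F]_(mu in DD) ef x mu.
Proof.
move=> yx; rewrite -RintegralZl; [|exact: mDD|exact: ef_int].
apply: le_Rintegral; [exact: mDD| |exact: ef_int|].
- apply: (eq_integrable _ (fun mu => ((expR (- (x - y)))%:E * (EFin \o ef y) mu)%E)).
  + exact: mDD.
  + by move=> mu _.
  by apply: integrableZl; [exact: mDD|exact: ef_int].
move=> mu /DD_ge1 h1; rewrite /ef -expRD ler_expR.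
have mu0 : 0 < mu by apply: lt_le_trans h1.
have : (x - y) / mu <= x - y.
  by rewrite ler_pdivrMr // ler_peMr // subr_ge0.
rewrite mulrBl; lra.
Qed.

End helpers.

Section mixture.
Context {R : realType} (F1 F2 : probability R R) (l : R)
  (l0 : 0 <= l) (l1 : l <= 1).

Let p1 : {nonneg R} := NngNum l0.
Let l1' : 0 <= 1 - l. Proof. by rewrite subr_ge0. Qed.
Let p2 : {nonneg R} := NngNum l1'.

Definition mixP := measure_add (mscale p1 F1) (mscale p2 F2).

Lemma mixPE A : mixP A = (l%:E * F1 A + (1 - l)%:E * F2 A)%E.
Proof. by rewrite /mixP measure_addE. Qed.

Let mixP_setT : mixP [set: R] = 1%E.
Proof. by rewrite mixPE !probability_setT !mule1 -EFinD addrC subrK. Qed.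

HB.instance Definition _ := Measure.copy mixP (measure_add (mscale p1 F1) (mscale p2 F2)).
HB.instance Definition _ := Measure_isProbability.Build _ _ _ mixP mixP_setT.

Lemma mixP_int t : \int[mixP]_(mu in DD) ef t mu =
  l * \int[F1]_(mu in DD) ef t mu + (1 - l) * \int[F2]_(mu in DD) ef t mu.
Proof.
have /measurable_EFinP mf := ef_meas t.
have f0 : forall x, DD x -> (0 <= (ef t x)%:E)%E.
  by move=> x Dx; rewrite lee_fin; have /andP[] := ef_bound t x Dx.
rewrite /Rintegral /mixP ge0_integral_measure_add //; last exact: mDD.
rewrite !ge0_integral_mscale //; try exact: mDD.
have h1 := integrable_fin_num mDD (ef_int F1 t).
have h2 := integrable_fin_num mDD (ef_int F2 t).
rewrite -(fineK h1) -(fineK h2) -!EFinM -EFinD /=.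
by [].
Qed.

End mixture.

Section main.
Context {R : realType}.

Lemma mixP_DD (F1 F2 : probability R R) l (l0 : 0 <= l) (l1 : l <= 1) :
  F1 DD = 1%E -> F2 DD = 1%E -> mixP F1 F2 l l0 l1 DD = 1%E.
Proof.
by move=> h1 h2; rewrite mixPE h1 h2 !mule1 -EFinD addrC subrK.
Qed.

Lemma mixE_mix (F1 F2 : probability R R) l (l0 : 0 <= l) (l1 : l <= 1) :
  F1 DD = 1%E -> F2 DD = 1%E -> forall t,
  mixE (mixP F1 F2 l l0 l1) t = l * mixE F1 t + (1 - l) * mixE F2 t.
Proof.
move=> h1 h2 t; rewrite !mixE_eq //; last exact: mixP_DD.
rewrite mixP_int.
move: (\int[F1]_(mu in DD) ef t mu) (\int[F2]_(mu in DD) ef t mu) => a b.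
ring.
Qed.

Definition Sset (q : R) (G : R -> R) := [set x : R | (1 - Eexp x) / q <= 1 - G x].

Lemma up_closed (q : R) (F : probability R R) x y : 0 < q -> F DD = 1%E ->
  y <= x -> Sset q (mixE F) y -> Sset q (mixE F) x.
Proof.
have E1 : forall z : R, 1 - (1 - z) = z by move=> z; rewrite opprB addrC subrK.
move=> q0 FD yx; rewrite /Sset /= !mixE_eq // /Eexp !E1 => hy.
apply: (le_trans _ (ef_mono F x y yx)).
have -> : expR (- x) = expR (- (x - y)) * expR (- y) by rewrite -expRD; congr expR; ring.
rewrite -mulrA ler_wpM2l ?expR_ge0 //.
Qed.

Lemma comb_cap (q : R) G1 G2 l x : 0 <= l <= 1 ->
  Sset q G1 x -> Sset q G2 x -> Sset q (fun t => l * G1 t + (1 - l) * G2 t) x.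
Proof.
move=> /andP[l0 l1]; rewrite /Sset /=.
set c := (1 - Eexp x) / q => h1 h2.
have e1 : l * c <= l * (1 - G1 x) by rewrite ler_wpM2l.
have e2 : (1 - l) * c <= (1 - l) * (1 - G2 x) by rewrite ler_wpM2l // subr_ge0.
lra.
Qed.

Lemma comb_cup (q : R) G1 G2 l x : 0 <= l <= 1 ->
  Sset q (fun t => l * G1 t + (1 - l) * G2 t) x -> Sset q G1 x \/ Sset q G2 x.
Proof.
move=> /andP[l0 l1]; rewrite /Sset /=.
set c := (1 - Eexp x) / q => h.
have [a1|a1] := leP c (1 - G1 x); first by left.
have [a2|a2] := leP c (1 - G2 x); first by right.
exfalso.
have [l00|lpos] := eqVneq l 0.
  move: h; rewrite l00 mul0r add0r subr0 mul1r; lra.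
have lp : 0 < l by rewrite lt_neqAle eq_sym lpos.
have e1 : l * (1 - G1 x) < l * c by rewrite ltr_pM2l.
have e2 : (1 - l) * (1 - G2 x) <= (1 - l) * c by rewrite ler_wpM2l ?subr_ge0 // ltW.
lra.
Qed.

Lemma geT (q t : R) G1 G2 l : 0 <= l <= 1 ->
  (t%:E <= Tq q G1)%E -> (t%:E <= Tq q G2)%E ->
  (t%:E <= Tq q (fun s => (l * G1 s + (1 - l) * G2 s)%R))%E.
Proof.
move=> hl T1 T2; apply: le_ereal_inf_tmp => _ [x Sx <-].
have [S1|S2] := comb_cup q G1 G2 l x hl Sx.
  apply: (le_trans T1); apply: ereal_inf_lbound; by exists x.
apply: (le_trans T2); apply: ereal_inf_lbound; by exists x.
Qed.

Lemma inS_of_Tq (q t e : R) (F : probability R R) : 0 < q -> F DD = 1%E ->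
  Tq q (mixE F) = t%:E -> 0 < e -> Sset q (mixE F) (t + e).
Proof.
move=> q0 FD T1 e0.
have : (Tq q (mixE F) < (t + e)%:E)%E by rewrite T1 lte_fin ltrDl.
move=> /ereal_inf_lt [_ [z Sz <-]]; rewrite lte_fin => zlt.
exact: (up_closed q F (t + e) z q0 FD (ltW zlt) Sz).
Qed.

End main.

Theorem lemma4p2 (R : realType) (q t : R) (hq0 : 0 < q) (hq1 : q < 1) :
  convex_collection [set G : R -> R | inGclass G /\ Tq q G = t%:E] /\
  convex_collection [set G : R -> R | inGclass G /\ (t%:E <= Tq q G)%E].
Proof.
have cls : forall (F1 F2 : probability R R) l, 0 <= l <= 1 ->
    F1 `[1, +oo[%classic = 1%E -> F2 `[1, +oo[%classic = 1%E ->
    inGclass (fun s => l * mixE F1 s + (1 - l) * mixE F2 s).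
  move=> F1 F2 l /andP[l0 l1] h1 h2.
  exists (mixP F1 F2 l l0 l1); split; first exact: mixP_DD.
  by apply/funext => s; rewrite mixE_mix.
split.
- move=> G1 G2 l [[F1 [F1D ->]] T1] [[F2 [F2D ->]] T2] hl; split.
    exact: cls.
  apply: le_anti; apply/andP; split; last first.
    by apply: geT => //; rewrite ?T1 ?T2.
  apply/lee_addgt0Pr => e e0; apply: ereal_inf_lbound; exists (t + e) => //.
  apply: comb_cap => //; exact: inS_of_Tq.
- move=> G1 G2 l [[F1 [F1D ->]] T1] [[F2 [F2D ->]] T2] hl; split.
    exact: cls.
  exact: geT.
Qed.
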